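(* Let $v_0,v_1:[0,1]\to\{0,1\}$ be given by $v_0(0)=0$, $v_0(t)=1$ for $t\in(0,1]$, and $v_1(1)=1$, $v_1(t)=0$ for $t\in[0,1)$. For $v\in\{v_0,v_1\}$, consider the functor from the groupoid $\mathbf{\mathsf{P}SymmH}$ (objects: complex Hilbert spaces of dimension greater than $2$; morphisms: semiunitaries modulo multiplication by scalars of modulus $1$) to the category $\mathbf{Chu}_{\mathbf{2}}$ of Chu spaces over $\{0,1\}$, sending $\mathcal{H}\mapsto(\mathsf{P}(\mathcal{H}),\mathsf{L}(\mathcal{H}),v\circ\bar e_{\mathcal{H}})$ and $[U]\mapsto(\mathsf{P}(U),U^{-1})$. Then for neither $v=v_0$ nor $v=v_1$ is this functor full.
   Context: A Chu space over a set $K$ is a triple $(X,A,e)$ with $e:X\times A\to K$; a Chu morphism $(X,A,e)\to(X',A',e')$ is a pair $(f_*:X\to X',f^*:A'\to A)$ with $e(x,f^*(a'))=e'(f_*(x),a')$. For a complex Hilbert space $\mathcal{H}$: $\mathsf{L}(\mathcal{H})$ is the set of closed subspaces, $P_S$ the orthogonal projector onto $S$, $\mathsf{P}(\mathcal{H})$ the set of rays $[\psi]=\{\lambda\psi:\lambda\in\mathbb{C}\}$, $\psi\neq 0$, and $\bar e_{\mathcal{H}}([\psi],S)=\|P_S\psi\|^2/\|\psi\|^2$. A semiunitary is an additive bijection $U$ with $U(\lambda\phi)=\sigma(\lambda)U\phi$ and $\langle U\phi,U\psi\rangle=\sigma(\langle\phi,\psi\rangle)$, $\sigma$ the identity or complex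 conjugation; $\mathsf{P}(U)([\psi])=[U\psi]$ and $U^{-1}$ maps a closed subspace to its inverse image. A functor is full if it is surjective on each hom-set. *)

(* Defs.v *)
(* complex scalars are R[i] (mathcomp-real-closed) for an
   arbitrary R : realType (any realType is a model of the real numbers). *)
From HB Require Import structures.
From mathcomp Require Import all_boot all_order all_algebra.
From mathcomp Require Import complex reals.
From Stdlib Require Import ClassicalEpsilon.
Set Implicit Arguments. Unset Strict Implicit. Unset Printing Implicit Defensive.
Import Order.TTheory GRing.Theory Num.Theory.
Local Open Scope ring_scope.

Record chu (K : Type) := Chu {
  chu_pts : Type;
  chu_sts : Type;
  chu_ev : chu_pts -> chu_sts -> K }.

Definition chu_morphism (K : Type) (A B : chu K)
    (fl : chu_pts A -> chu_pts B) (fu : chu_sts B -> chu_sts A) : Prop :=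
  forall x a', chu_ev x (fu a') = chu_ev (fl x) a'.

Section Hilbert.
Variable R : realType.
Local Notation C := (R[i]).

Record hilbert := Hilbert {
  hcar : lmodType C;
  hip : hcar -> hcar -> C;
  hip_linl : forall (a : C) (x y z : hcar), hip (a *: x + y) z = a * hip x z + hip y z;
  hip_sym : forall x y : hcar, hip y x = Num.conj (hip x y);
  hip_ge0 : forall x : hcar, 0 <= hip x x;
  hip_eq0 : forall x : hcar, hip x x = 0 -> x = 0;
  (* completeness w.r.t. the norm ||x||^2 = <x,x> *)
  hcomplete : forall u : nat -> hcar,
    (forall e : C, 0 < e -> exists N, forall m n, (N <= m)%N -> (N <= n)%N ->
        hip (u m - u n) (u m - u n) < e) ->
    exists l, forall e : C, 0 < e -> exists N, forall n, (N <= n)%N ->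
        hip (u n - l) (u n - l) < e }.

Variable H : hilbert.
Local Notation V := (hcar H).
Local Notation ip := (@hip H).

Definition dim_gt2 : Prop :=
  exists e : 'I_3 -> V, forall c : 'I_3 -> C,
    \sum_(i < 3) c i *: e i = 0 -> forall i, c i = 0.

Definition closed_set (S : V -> Prop) : Prop :=
  forall (u : nat -> V) (l : V), (forall n, S (u n)) ->
    (forall e : C, 0 < e -> exists N, forall n, (N <= n)%N ->
        ip (u n - l) (u n - l) < e) -> S l.

Record csubspace := CSubspace {
  cs_set : V -> Prop;
  cs_0 : cs_set 0;
  cs_D : forall x y, cs_set x -> cs_set y -> cs_set (x + y);
  cs_Z : forall (a : C) x, cs_set x -> cs_set (a *: x);
  cs_closed : closed_set cs_set }.

Record ray := Ray {
  ray_set : V -> Prop;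
  ray_ok : exists psi : V, psi != 0 /\
      ray_set = (fun x => exists l : C, x = l *: psi) }.

(* orthogonal projector P_S psi: the (unique, by the projection theorem)
   p in S with psi - p orthogonal to S *)
Definition is_proj (S : csubspace) (psi p : V) : Prop :=
  cs_set S p /\ forall s, cs_set S s -> ip (psi - p) s = 0.

Definition proj (S : csubspace) (psi : V) : V :=
  epsilon (inhabits 0) (is_proj S psi).

Definition ray_rep (r : ray) : V :=
  epsilon (inhabits 0) (fun psi => psi != 0 /\ ray_set r psi).

Definition ebar (r : ray) (S : csubspace) : R :=
  complex.Re (ip (proj S (ray_rep r)) (proj S (ray_rep r)) / ip (ray_rep r) (ray_rep r)).

End Hilbert.

Arguments csubspace {R} H.
Arguments ray {R} H.

(* v_0, v_1 : [0,1] -> {0,1}  (only their values on [0,1] matter) *)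
Definition v0 (R : realType) (t : R) : bool := t != 0.
Definition v1 (R : realType) (t : R) : bool := t == 1.

Definition chuH (R : realType) (v : R -> bool) (H : hilbert R) : chu bool :=
  @Chu bool (ray H) (csubspace H) (fun r S => v (ebar r S)).

Definition semiunitary (R : realType) (H H' : hilbert R)
    (U : hcar H -> hcar H') : Prop :=
  bijective U /\ (forall x y, U (x + y) = U x + U y) /\
  exists sigma : R[i] -> R[i],
    (sigma = id \/ sigma = Num.conj) /\
    (forall (l : R[i]) x, U (l *: x) = sigma l *: U x) /\
    (forall x y, hip (U x) (U y) = sigma (hip x y)).

Definition image_of_semiunitary (R : realType) (H H' : hilbert R)
    (U : hcar H -> hcar H')
    (fl : ray H -> ray H') (fu : csubspace H' -> csubspace H) : Prop :=
  (forall r : ray H, ray_set (fl r) = (fun y => exists x, ray_set r x /\ y = U x)) /\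
  (forall S' : csubspace H', cs_set (fu S') = (fun x => cs_set S' (U x))).

Definition functor_full (R : realType) (v : R -> bool) : Prop :=
  forall (H H' : hilbert R), dim_gt2 H -> dim_gt2 H' ->
  forall (fl : ray H -> ray H') (fu : csubspace H' -> csubspace H),
    @chu_morphism bool (chuH v H) (chuH v H') fl fu ->
    exists U : hcar H -> hcar H',
      semiunitary U /\ image_of_semiunitary U fl fu.

(* Main.v *)
Require Import Defs.
From HB Require Import structures.
From mathcomp Require Import all_boot all_order all_algebra.
From mathcomp Require Import complex reals ring lra.
From mathcomp Require Import all_classical all_reals all_analysis.
Import numFieldNormedType.Exports.
From Stdlib Require Import ClassicalEpsilon.
Set Implicit Arguments. Unset Strict Implicit. Unset Printing Implicit Defensive.
Import Order.TTheory GRing.Theory Num.Theory.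
Local Open Scope ring_scope.

Section Generic.
Variable R : realType.
Local Notation C := R[i].
Variable H : hilbert R.
Local Notation V := (hcar H).
Local Notation ip := (@hip R H).

Lemma ip0l (s : V) : ip 0 s = 0.
Proof.
have h := hip_linl 1 0 0 s.
rewrite scaler0 addr0 mul1r in h.
by apply/eqP; rewrite -(subrr (ip 0 s)) {2}h addrK.
Qed.

Lemma ip0r (s : V) : ip s 0 = 0.
Proof. by rewrite hip_sym ip0l rmorph0. Qed.

Definition fullS : csubspace H.
refine (@CSubspace R H (fun _ => True) I (fun _ _ _ _ => I) (fun _ _ _ => I) _).
by move=> u l _ _.
Defined.

Definition zeroS : csubspace H.
refine (@CSubspace R H (fun x => x = 0) erefl _ _ _).
- by move=> x y -> ->; rewrite addr0.
- by move=> a x ->; rewrite scaler0.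
- move=> u l hu hl.
  have : ip (0 - l) (0 - l) = 0.
    apply/eqP; apply: contraT => hne.
    have hpos : 0 < ip (0 - l) (0 - l) by rewrite lt_def hne hip_ge0.
    have [N HN] := hl _ hpos.
    have := HN N (leqnn N); move: (hu N) => /= ->; by rewrite ltxx.
  by move/hip_eq0; rewrite sub0r => /eqP; rewrite oppr_eq0 => /eqP.
Defined.

Lemma ray_rep_spec (r : ray H) : ray_rep r != 0 /\ ray_set r (ray_rep r).
Proof.
rewrite /ray_rep; apply: (epsilon_spec (inhabits 0) (fun psi => psi != 0 /\ ray_set r psi)).
case: (ray_ok r) => psi [nz ->]; exists psi; split => //; exists 1; by rewrite scale1r.
Qed.

Lemma ip_rep_neq0 (r : ray H) : ip (ray_rep r) (ray_rep r) != 0.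
Proof.
case: (ray_rep_spec r) => nz _; apply: contra nz => /eqP /hip_eq0 ->; by [].
Qed.

Lemma proj_full (psi : V) : Defs.proj fullS psi = psi.
Proof.
have : is_proj fullS psi (Defs.proj fullS psi).
  rewrite /Defs.proj; apply: (epsilon_spec (inhabits 0) (is_proj fullS psi)); exists psi; split => // s _.
  by rewrite subrr ip0l.
case=> _ /(_ (psi - Defs.proj fullS psi) I) /hip_eq0 /eqP.
by rewrite subr_eq0 => /eqP.
Qed.

Lemma proj_zero (psi : V) : Defs.proj zeroS psi = 0.
Proof.
have : is_proj zeroS psi (Defs.proj zeroS psi).
  rewrite /Defs.proj; apply: (epsilon_spec (inhabits 0) (is_proj zeroS psi)); exists 0; split => // s ->.
  by rewrite ip0r.
by case.
Qed.

Lemma ebar_full r : ebar r fullS = 1.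
Proof. by rewrite /ebar proj_full divff ?ip_rep_neq0. Qed.

Lemma ebar_zero r : ebar r zeroS = 0.
Proof. by rewrite /ebar proj_zero ip0l mul0r. Qed.

Lemma two_dep (e : 'I_3 -> V)
  (Hind : forall c : 'I_3 -> C, \sum_(i < 3) c i *: e i = 0 -> forall i, c i = 0)
  (i0 i1 : 'I_3) (neq : i0 != i1) (a b : C) :
  a *: e i0 + b *: e i1 = 0 -> a = 0.
Proof.
move=> h.
pose c := fun i : 'I_3 => if i == i0 then a else if i == i1 then b else 0.
have hs : \sum_(i < 3) c i *: e i = a *: e i0 + b *: e i1.
  have n10 : (i1 == i0) = false by rewrite eq_sym (negbTE neq).
  rewrite (bigD1 i0) //= (bigD1 i1) /=; last by rewrite n10.
  rewrite big1 ?addr0.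
    by rewrite /c eqxx n10 eqxx.
  by move=> i /andP[/negbTE n0 /negbTE n1]; rewrite /c n0 n1 scale0r.
have := Hind c; rewrite hs => /(_ h i0); by rewrite /c eqxx.
Qed.

End Generic.

Lemma not_full (R : realType) (v : R -> bool) (Hv0 : v 0 = false) (Hv1 : v 1 = true)
  (H : hilbert R) : dim_gt2 H -> ~ functor_full v.
Proof.
move=> hd full.
case: (hd) => e Hind.
pose i0 : 'I_3 := ord0.
pose i1 : 'I_3 := @Ordinal 3 1 isT.
have n01 : i0 != i1 by [].
have n10 : i1 != i0 by [].
have ne0 : e i0 != 0.
  apply/negP => /eqP h0.
  have := @two_dep R H e Hind i0 i1 n01 1 0.
  rewrite h0 scaler0 scale0r addr0 => /(_ erefl) /eqP; by rewrite oner_eq0.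
have ne1 : e i1 != 0.
  apply/negP => /eqP h0.
  have := @two_dep R H e Hind i1 i0 n10 1 0.
  rewrite h0 scaler0 scale0r addr0 => /(_ erefl) /eqP; by rewrite oner_eq0.
pose r1 := @Ray R H (fun x => exists l : R[i], x = l *: e i0) (ex_intro _ (e i0) (conj ne0 erefl)).
pose r2 := @Ray R H (fun x => exists l : R[i], x = l *: e i1) (ex_intro _ (e i1) (conj ne1 erefl)).
pose fl := fun _ : ray H => r1.
pose fu := fun S' : csubspace H => if v (ebar r1 S') then fullS H else zeroS H.
have hchu : @chu_morphism bool (chuH v H) (chuH v H) fl fu.
  move=> x a' /=; rewrite /fu /fl.
  by case: (v (ebar r1 a')); rewrite ?ebar_full ?ebar_zero.
have [U [[bijU _] [himg _]]] := full H H hd hd fl fu hchu.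
have h1 := himg r1; have h2 := himg r2.
have E : (fun y => exists x, ray_set r1 x /\ y = U x) =
         (fun y => exists x, ray_set r2 x /\ y = U x) by rewrite -h1 -h2.
have := congr1 (fun P : hcar H -> Prop => P (U (e i0))) E => /= E'.
have : exists x, ray_set r1 x /\ U (e i0) = U x.
  by exists (e i0); split => //; exists 1; rewrite scale1r.
rewrite E' => -[x [[l ->]] /(bij_inj bijU) hx].
have := @two_dep R H e Hind i0 i1 n01 1 (- l).
rewrite scale1r hx scaleNr subrr => /(_ erefl) /eqP; by rewrite oner_eq0.
Qed.

Local Open Scope classical_set_scope.
Lemma real_complete (R : realType) (a : nat -> R) :
  (forall e : R, 0 < e -> exists N, forall m n, (N <= m)%N -> (N <= n)%N -> `|a m - a n| < e) ->
  exists l, forall e : R, 0 < e -> exists N, forall n, (N <= n)%N -> `|a n - l| < e.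
Proof.
move=> Ca.
have : cvg (a @ \oo).
  apply: cauchy_cvg; apply: cauchy_exP => e e0.
  have [N HN] := Ca e e0.
  exists (a N); exists N => // n /= Nn.
  rewrite /ball /=; exact: HN.
move=> /cvgrPdist_lt Hl.
exists (lim (a @ \oo)) => e e0.
have [N _ HN] := Hl e e0.
exists N => n Nn; rewrite distrC; exact: HN.
Qed.

Section Concrete.
Local Open Scope complex_scope.
Variable R : realType.
Local Notation C := R[i].
Definition V3 := (C * C * C)%type.
Definition ip3 (x y : V3) : C :=
  x.1.1 * Num.conj y.1.1 + x.1.2 * Num.conj y.1.2 + x.2 * Num.conj y.2.

Lemma scaleCE (a x : C) : a *: x = a * x. Proof. reflexivity. Qed.
Lemma cK : forall x : C, Num.conj (Num.conj x) = x. Proof. exact: conjCK. Qed.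
Lemma conjM (x y : C) : Num.conj (x * y) = Num.conj x * Num.conj y. Proof. exact: rmorphM. Qed.
Lemma conjD (x y : C) : Num.conj (x + y) = Num.conj x + Num.conj y. Proof. exact: rmorphD. Qed.

Lemma ip3_linl (a : C) (x y z : V3) : ip3 (a *: x + y) z = a * ip3 x z + ip3 y z.
Proof. rewrite /ip3 /= !scaleCE. ring. Qed.
Lemma ip3_sym (x y : V3) : ip3 y x = Num.conj (ip3 x y).
Proof. by rewrite /ip3 !conjD !conjM !cK ![_ * Num.conj _]mulrC. Qed.
Lemma ip3_ge0 x : 0 <= ip3 x x.
Proof. by rewrite /ip3 !addr_ge0 // mul_conjC_ge0. Qed.
Lemma ip3_eq0 x : ip3 x x = 0 -> x = 0.
Proof.
move/eqP; rewrite /ip3 paddr_eq0 ?addr_ge0 ?mul_conjC_ge0 // paddr_eq0 ?mul_conjC_ge0 //.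
rewrite !mul_conjC_eq0 => /andP[/andP[/eqP h1 /eqP h2] /eqP h3].
by case: x h1 h2 h3 => [[? ?] ?] /= -> -> ->.
Qed.

Definition sq (z : C) : R := (complex.Re z)^+2 + (complex.Im z)^+2.
Lemma mulJ (z : C) : z * Num.conj z = (sq z)%:C.
Proof.
case: z => a b; rewrite /sq /=.
apply/eqP; rewrite eq_complex /=; apply/andP; split; apply/eqP; ring.
Qed.
Lemma sq_ge0 z : 0 <= sq z. Proof. by rewrite /sq addr_ge0 // sqr_ge0. Qed.

Lemma ip3E x : ip3 x x = (sq x.1.1 + sq x.1.2 + sq x.2)%:C.
Proof. by rewrite /ip3 !mulJ !rmorphD. Qed.
End Concrete.

Section Concrete2.
Local Open Scope complex_scope.
Variable R : realType.
Local Notation C := R[i].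
Local Notation V3 := (V3 R).

Definition S3 (x : V3) := sq x.1.1 + sq x.1.2 + sq x.2.

Lemma ReB (a b : C) : complex.Re (a - b) = complex.Re a - complex.Re b.
Proof. by case: a; case: b. Qed.
Lemma ImB (a b : C) : complex.Im (a - b) = complex.Im a - complex.Im b.
Proof. by case: a; case: b. Qed.

Lemma sq_lt (d e : R) : 0 < e -> d ^+ 2 < e ^+ 2 -> `|d| < e.
Proof.
move=> e0 h; case: (ger0P d) => hd; nra.
Qed.

Lemma sq_le (d e : R) : 0 < e -> e <= 1 -> `|d| < e -> d ^+ 2 <= e.
Proof.
move=> e0 e1 h.
have -> : d ^+ 2 = `|d| ^+ 2 by rewrite real_normK ?num_real.
have := normr_ge0 d; nra.
Qed.

Lemma comp_lim (u : nat -> V3) (g : V3 -> R)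
  (hg : forall x, g x ^+ 2 <= S3 x) (hB : forall x y, g (x - y) = g x - g y) :
  (forall e : C, 0 < e -> exists N, forall m n, (N <= m)%N -> (N <= n)%N ->
        ip3 (u m - u n) (u m - u n) < e) ->
  exists l, forall e : R, 0 < e -> exists N, forall n, (N <= n)%N -> `|g (u n) - l| < e.
Proof.
move=> CU; apply: real_complete => e e0.
have [N HN] := CU ((e ^+ 2)%:C) (ltac:(by rewrite ltcR exprn_gt0)).
exists N => m n hm hn.
have := HN m n hm hn; rewrite ip3E ltcR -hB => h.
apply: sq_lt => //; apply: le_lt_trans (hg _) h.
Qed.

End Concrete2.

Section Concrete3.
Local Open Scope complex_scope.
Variable R : realType.
Local Notation C := R[i].
Local Notation V3 := (V3 R).

Lemma ip3_complete (u : nat -> V3) :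
  (forall e : C, 0 < e -> exists N, forall m n, (N <= m)%N -> (N <= n)%N ->
        ip3 (u m - u n) (u m - u n) < e) ->
  exists l, forall e : C, 0 < e -> exists N, forall n, (N <= n)%N ->
        ip3 (u n - l) (u n - l) < e.
Proof.
move=> CU.
have gB1 : forall x y : V3, complex.Re (x - y).1.1 = complex.Re x.1.1 - complex.Re y.1.1 by move=> x y; exact: ReB.
have gB2 : forall x y : V3, complex.Im (x - y).1.1 = complex.Im x.1.1 - complex.Im y.1.1 by move=> x y; exact: ImB.
have gB3 : forall x y : V3, complex.Re (x - y).1.2 = complex.Re x.1.2 - complex.Re y.1.2 by move=> x y; exact: ReB.
have gB4 : forall x y : V3, complex.Im (x - y).1.2 = complex.Im x.1.2 - complex.Im y.1.2 by move=> x y; exact: ImB.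
have gB5 : forall x y : V3, complex.Re (x - y).2 = complex.Re x.2 - complex.Re y.2 by move=> x y; exact: ReB.
have gB6 : forall x y : V3, complex.Im (x - y).2 = complex.Im x.2 - complex.Im y.2 by move=> x y; exact: ImB.
have hS : forall x : V3, [/\ complex.Re x.1.1 ^+ 2 <= S3 x, complex.Im x.1.1 ^+ 2 <= S3 x,
   complex.Re x.1.2 ^+ 2 <= S3 x, complex.Im x.1.2 ^+ 2 <= S3 x &
   [/\ complex.Re x.2 ^+ 2 <= S3 x & complex.Im x.2 ^+ 2 <= S3 x]].
  move=> x; rewrite /S3 /sq.
  have := sqr_ge0 (complex.Re x.1.1); have := sqr_ge0 (complex.Im x.1.1).
  have := sqr_ge0 (complex.Re x.1.2); have := sqr_ge0 (complex.Im x.1.2).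
  have := sqr_ge0 (complex.Re x.2); have := sqr_ge0 (complex.Im x.2).
  move=> *; split; [lra|lra|lra|lra|split; lra].
have [a1 L1] := @comp_lim R u (fun x => complex.Re x.1.1) (fun x => let: And5 h _ _ _ _ := hS x in h) gB1 CU.
have [b1 L2] := @comp_lim R u (fun x => complex.Im x.1.1) (fun x => let: And5 _ h _ _ _ := hS x in h) gB2 CU.
have [a2 L3] := @comp_lim R u (fun x => complex.Re x.1.2) (fun x => let: And5 _ _ h _ _ := hS x in h) gB3 CU.
have [b2 L4] := @comp_lim R u (fun x => complex.Im x.1.2) (fun x => let: And5 _ _ _ h _ := hS x in h) gB4 CU.
have [a3 L5] := @comp_lim R u (fun x => complex.Re x.2) (fun x => let: And5 _ _ _ _ (conj h _) := hS x in h) gB5 CU.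
have [b3 L6] := @comp_lim R u (fun x => complex.Im x.2) (fun x => let: And5 _ _ _ _ (conj _ h) := hS x in h) gB6 CU.
exists ((a1 +i* b1), (a2 +i* b2), (a3 +i* b3)) => e.
rewrite ltcE => /andP[/eqP Ime Ree].
pose d := Num.min 1 (complex.Re e / 7).
have d0 : 0 < d by rewrite lt_min ltr01 divr_gt0.
have d1 : d <= 1 by rewrite ge_min lexx.
have d7 : d <= complex.Re e / 7 by rewrite ge_min lexx orbT.
have [N1 H1] := L1 d d0. have [N2 H2] := L2 d d0. have [N3 H3] := L3 d d0.
have [N4 H4] := L4 d d0. have [N5 H5] := L5 d d0. have [N6 H6] := L6 d d0.
exists (maxn N1 (maxn N2 (maxn N3 (maxn N4 (maxn N5 N6))))) => n.
rewrite !geq_max => /andP[n1 /andP[n2 /andP[n3 /andP[n4 /andP[n5 n6]]]]].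
rewrite ip3E ltcE /=; apply/andP; split; first by rewrite Ime.
rewrite /sq !ReB !ImB /=.
have := sq_le d0 d1 (H1 n n1); have := sq_le d0 d1 (H2 n n2); have := sq_le d0 d1 (H3 n n3).
have := sq_le d0 d1 (H4 n n4); have := sq_le d0 d1 (H5 n n5); have := sq_le d0 d1 (H6 n n6).
move=> *; lra.
Qed.

Definition H3 : hilbert R := @Hilbert R V3 (@ip3 R) (@ip3_linl R) (@ip3_sym R)
  (@ip3_ge0 R) (@ip3_eq0 R) ip3_complete.

End Concrete3.

Lemma H3_dim (R : realType) : dim_gt2 (H3 R).
Proof.
pose e := fun i : 'I_3 => match val i with
  | 0 => ((1 : R[i]), (0 : R[i]), (0 : R[i]))
  | 1 => (0, 1, 0) | _ => (0, 0, 1) end : V3 R.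
exists e => c.
rewrite !big_ord_recl big_ord0 /=.
move=> h.
have h1 := congr1 (fun x : V3 R => x.1.1) h.
have h2 := congr1 (fun x : V3 R => x.1.2) h.
have h3 := congr1 (fun x : V3 R => x.2) h.
rewrite /= !scaleCE ?mulr1 ?mulr0 ?addr0 ?add0r in h1 h2 h3.
move=> [[|[|[|k]]] Hk].
- by rewrite -h1; congr c; apply: val_inj.
- by rewrite -h2; congr c; apply: val_inj.
- by rewrite -h3; congr c; apply: val_inj.
- by [].
Qed.

Theorem proposition4p3 (R : realType) :
  ~ functor_full (@v0 R) /\ ~ functor_full (@v1 R).
Proof.
split; apply: (@not_full R _ _ _ (H3 R) (H3_dim R)).
- by rewrite /v0 eqxx.
- by rewrite /v0 oner_eq0.
- by rewrite /v1 eq_sym oner_eq0.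
- by rewrite /v1 eqxx.
Qed.
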